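(* Let $k\ge 3$, $F$ a field, $\Phi\le F^*$ a subgroup of order $k$ with generator $\varphi$, and suppose $(F,\Phi)$ is circular. Then the group $\mathcal{G}_1$ maps $\mathcal{O}_\varphi(F,k)$ into itself (so acts on it). If moreover $k$ is even, then $\mathcal{G}_0$ acts on $\mathcal{O}_\varphi(F,k)$.
   Context: $\mathbf{k}=\{1,\dots,k-1\}$, $\mathbf{k}_0=\{0,\dots,k-1\}$. $(F,\Phi)$ is circular if $|(\Phi a+b)\cap\Phi c|\le2$ for all $a,b,c\in F^*$, with $\Phi a+b=\{\lambda a+b:\lambda\in\Phi\}$. A quadruple $(i,j\mid s,t)\in\mathbf{k}^4$ with $i\ne s$ is an overlap (w.r.t. $\varphi$) if $\varphi^\omega(\varphi^j-1)(\varphi^s-1)=(\varphi^i-1)(\varphi^t-1)$ for some $\omega\in\mathbf{k}_0$; it is trivial if one of $i\equiv\pm j$, $j\equiv\pm t$, $t\equiv\pm s$, $s\equiv\pm i\pmod k$ holds, nontrivial otherwise; $\mathcal{O}_\varphi(F,k)$ is the set of nontrivial overlaps. Groups acting on $\mathbf{k}^4$ (quadruples written $(i,j\mid s,t)$): for $m=1,2,3,4$, $\kappa_m$ replaces the $m$-th entry $u$ by $k-u$. Let $D_4$ be the group of coordinate permutations generated by the transpositions $(i,t)$, $(j,s)$ and the double transposition $(i,j)(s,t)$ (a dihedral group of order 8, consisting of the identity and $(i,t),(j,s),(i,t)(j,s),(i,s)(j,t),(i,j)(s,t),(i,j,t,s),(i,s,t,j)$). $\mathcal{G}_0$ is the group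 generated by $\kappa_1,\dots,\kappa_4$ and $D_4$; $\mathcal{G}_1$ is the group generated by $\kappa_1\kappa_4,\kappa_2\kappa_4,\kappa_3\kappa_4$ and $D_4$. *)

(* Defs.v *)
From HB Require Import structures.
From mathcomp Require Import all_boot all_order all_algebra.
Set Implicit Arguments. Unset Strict Implicit. Unset Printing Implicit Defensive.
Import Order.TTheory GRing.Theory Num.Theory.
Local Open Scope ring_scope.

Definition Phi (F : fieldType) (phi : F) (k : nat) : seq F :=
  [seq phi ^+ i | i <- iota 0 k].

Definition circular (F : fieldType) (phi : F) (k : nat) : Prop :=
  forall a b c : F, a != 0 -> b != 0 -> c != 0 ->
    let PhiAb := [seq l * a + b | l <- Phi phi k] in
    let PhiC := [seq m * c | m <- Phi phi k] in
    (size (undup [seq x <- PhiAb | x \in PhiC]) <= 2)%N.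

Record quad := Quad { qi : nat; qj : nat; qs : nat; qt : nat }.

Definition in_k (k u : nat) : bool := (0 < u)%N && (u < k)%N.

Definition is_overlap (F : fieldType) (phi : F) (k : nat) (q : quad) : Prop :=
  [/\ in_k k (qi q), in_k k (qj q), in_k k (qs q), in_k k (qt q)
    & qi q != qs q] /\
  exists w : nat, (w < k)%N /\
    phi ^+ w * (phi ^+ qj q - 1) * (phi ^+ qs q - 1) =
    (phi ^+ qi q - 1) * (phi ^+ qt q - 1).

Definition pm_cong (k u v : nat) : bool :=
  (u == v %[mod k])%N || ((u + v) %% k == 0)%N.

Definition trivial_quad (k : nat) (q : quad) : bool :=
  [|| pm_cong k (qi q) (qj q), pm_cong k (qj q) (qt q),
      pm_cong k (qt q) (qs q) | pm_cong k (qs q) (qi q)].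

Definition in_O (F : fieldType) (phi : F) (k : nat) (q : quad) : Prop :=
  is_overlap phi k q /\ ~~ trivial_quad k q.

Definition kappa1 (k : nat) (q : quad) := Quad (k - qi q) (qj q) (qs q) (qt q).
Definition kappa2 (k : nat) (q : quad) := Quad (qi q) (k - qj q) (qs q) (qt q).
Definition kappa3 (k : nat) (q : quad) := Quad (qi q) (qj q) (k - qs q) (qt q).
Definition kappa4 (k : nat) (q : quad) := Quad (qi q) (qj q) (qs q) (k - qt q).

Definition swap_it (q : quad) := Quad (qt q) (qj q) (qs q) (qi q).
Definition swap_js (q : quad) := Quad (qi q) (qs q) (qj q) (qt q).
Definition swap_ij_st (q : quad) := Quad (qj q) (qi q) (qt q) (qs q).

Inductive generated (gens : (quad -> quad) -> Prop) : (quad -> quad) -> Prop :=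
  | gen_id : generated gens id
  | gen_base g : gens g -> generated gens g
  | gen_comp g h : generated gens g -> generated gens h ->
                   generated gens (fun q => g (h q)).

Definition gens_D4 (g : quad -> quad) : Prop :=
  g = swap_it \/ g = swap_js \/ g = swap_ij_st.

Definition gens_G0 (k : nat) (g : quad -> quad) : Prop :=
  g = kappa1 k \/ g = kappa2 k \/ g = kappa3 k \/ g = kappa4 k \/ gens_D4 g.

Definition gens_G1 (k : nat) (g : quad -> quad) : Prop :=
  g = (fun q => kappa1 k (kappa4 k q)) \/
  g = (fun q => kappa2 k (kappa4 k q)) \/
  g = (fun q => kappa3 k (kappa4 k q)) \/ gens_D4 g.

Definition G0 (k : nat) := generated (gens_G0 k).
Definition G1 (k : nat) := generated (gens_G1 k).

(* Main.v *)
Require Import Defs.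
From HB Require Import structures.
From mathcomp Require Import all_boot all_order all_algebra.
From mathcomp Require Import zify ring.
Import GRing.Theory.
Local Open Scope ring_scope.

Lemma pm_congE k u v : in_k k u -> in_k k v ->
  pm_cong k u v = (u == v) || (u + v == k)%N.
Proof.
rewrite /in_k /pm_cong => /andP[u0 uk] /andP[v0 vk].
rewrite (modn_small uk) (modn_small vk).
case: (ltnP (u + v) k) => h.
  rewrite (modn_small h); congr (_ || _); apply/eqP/eqP; lia.
have -> : (u + v = (u + v - k) + k)%N by lia.
rewrite modnDr modn_small; last by lia.
congr (_ || _); apply/eqP/eqP; lia.
Qed.

Lemma in_k_sub k u : in_k k u -> in_k k (k - u).
Proof. rewrite /in_k => /andP[? ?]; apply/andP; split; lia. Qed.

Lemma in_k_le k u : in_k k u -> (u <= k)%N.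
Proof. by case/andP=> _ /ltnW. Qed.

Section G.
Variables (k : nat) (F : fieldType) (phi : F).
Hypotheses (k0 : (0 < k)%N) (pk : phi ^+ k = 1).

Lemma ex_w n (A1 A2 B : F) : phi ^+ n * A1 * A2 = B ->
  exists w, (w < k)%N /\ phi ^+ w * A1 * A2 = B.
Proof.
move=> E; exists (n %% k)%N; split; first by rewrite ltn_mod.
rewrite -E; congr (_ * _ * _).
by rewrite {2}(div.divn_eq n k) exprD mulnC exprM pk expr1n mul1r.
Qed.

Lemma em u : (u <= k)%N -> phi ^+ (k - u) - 1 = - phi ^+ (k - u) * (phi ^+ u - 1).
Proof. by move=> h; rewrite mulNr mulrBr -exprD subnK // pk mulr1 opprB. Qed.

Lemma pinv u : (u <= k)%N -> phi ^+ u * phi ^+ (k - u) = 1.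
Proof. by move=> h; rewrite -exprD subnKC. Qed.

Ltac prep := intros [i j s t] [[[Hi Hj Hs Ht His] [w [Hw E]]] Hnt]; simpl in *;
  pose proof (in_k_sub _ _ Hi) as Hi'; pose proof (in_k_sub _ _ Hj) as Hj';
  pose proof (in_k_sub _ _ Hs) as Hs'; pose proof (in_k_sub _ _ Ht) as Ht';
  revert Hnt; rewrite /in_O /is_overlap /trivial_quad /= !pm_congE //; intro Hnt;
  assert (hi : (0 < i < k)%N) by exact Hi; assert (hj : (0 < j < k)%N) by exact Hj;
  assert (hs : (0 < s < k)%N) by exact Hs; assert (ht : (0 < t < k)%N) by exact Ht;
  pose proof (in_k_le _ _ Hi) as li; pose proof (in_k_le _ _ Hj) as lj;
  pose proof (in_k_le _ _ Hs) as ls; pose proof (in_k_le _ _ Ht) as lt;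
  split; [split; [rewrite /in_k; split => //; lia | ] | lia].

Lemma g_it : forall q, in_O phi k q -> in_O phi k (swap_it q).
Proof. prep. exists w; split => //; rewrite E; ring. Qed.

Lemma g_js : forall q, in_O phi k q -> in_O phi k (swap_js q).
Proof. prep. exists w; split => //; rewrite -E; ring. Qed.

Lemma g_ijst : forall q, in_O phi k q -> in_O phi k (swap_ij_st q).
Proof.
prep. apply: (ex_w (k - w)).
transitivity (phi ^+ (k - w) * ((phi ^+ i - 1) * (phi ^+ t - 1))); first ring.
rewrite -E; transitivity (phi ^+ w * phi ^+ (k - w) * ((phi ^+ j - 1) * (phi ^+ s - 1))); first ring.
rewrite pinv; [ring | lia].
Qed.

Lemma g14 : forall q, in_O phi k q -> in_O phi k (kappa1 k (kappa4 k q)).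
Proof.
prep. apply: (ex_w (w + (k - i) + (k - t))).
rewrite !exprD (em _ li) (em _ lt).
transitivity (phi ^+ (k - i) * phi ^+ (k - t) * (phi ^+ w * (phi ^+ j - 1) * (phi ^+ s - 1))); first ring.
rewrite E; ring.
Qed.

Lemma g24 : forall q, in_O phi k q -> in_O phi k (kappa2 k (kappa4 k q)).
Proof.
prep. apply: (ex_w (w + (k - t) + j)).
rewrite !exprD (em _ lj) (em _ lt).
transitivity (- phi ^+ (k - t) * (phi ^+ j * phi ^+ (k - j)) * (phi ^+ w * (phi ^+ j - 1) * (phi ^+ s - 1))); first ring.
rewrite E pinv //; ring.
Qed.

Lemma g34 : forall q, in_O phi k q -> in_O phi k (kappa3 k (kappa4 k q)).
Proof.
prep. apply: (ex_w (w + (k - t) + s)).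
rewrite !exprD (em _ ls) (em _ lt).
transitivity (- phi ^+ (k - t) * (phi ^+ s * phi ^+ (k - s)) * (phi ^+ w * (phi ^+ j - 1) * (phi ^+ s - 1))); first ring.
rewrite E pinv //; ring.
Qed.

Variable h : nat.
Hypothesis hm1 : phi ^+ h = -1.
Hypothesis hk : (k = h + h)%N.

Lemma g1 : forall q, in_O phi k q -> in_O phi k (kappa1 k q).
Proof.
prep. apply: (ex_w (h + (k - i) + w)).
rewrite !exprD hm1 (em _ li).
transitivity (- phi ^+ (k - i) * (phi ^+ w * (phi ^+ j - 1) * (phi ^+ s - 1))); first ring.
rewrite E; ring.
Qed.

Lemma g4 : forall q, in_O phi k q -> in_O phi k (kappa4 k q).
Proof.
prep. apply: (ex_w (h + (k - t) + w)).
rewrite !exprD hm1 (em _ lt).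
transitivity (- phi ^+ (k - t) * (phi ^+ w * (phi ^+ j - 1) * (phi ^+ s - 1))); first ring.
rewrite E; ring.
Qed.

Lemma g2 : forall q, in_O phi k q -> in_O phi k (kappa2 k q).
Proof.
prep. apply: (ex_w (w + h + j)).
rewrite !exprD hm1 (em _ lj).
transitivity ((phi ^+ j * phi ^+ (k - j)) * (phi ^+ w * (phi ^+ j - 1) * (phi ^+ s - 1))); first ring.
rewrite E pinv //; ring.
Qed.

Lemma g3 : forall q, in_O phi k q -> in_O phi k (kappa3 k q).
Proof.
prep. apply: (ex_w (w + h + s)).
rewrite !exprD hm1 (em _ ls).
transitivity ((phi ^+ s * phi ^+ (k - s)) * (phi ^+ w * (phi ^+ j - 1) * (phi ^+ s - 1))); first ring.
rewrite E pinv //; ring.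
Qed.

End G.

Lemma gen_pres (P : quad -> Prop) gens g :
  (forall g0, gens g0 -> forall q, P q -> P (g0 q)) ->
  generated gens g -> forall q, P q -> P (g q).
Proof. move=> H; elim => //= g1 h1 _ IH1 _ IH2 q Pq; exact/IH1/IH2. Qed.

Theorem lemma16 (k : nat) (F : fieldType) (phi : F) :
  (3 <= k)%N ->
  (k.-primitive_root phi)%R ->
  circular phi k ->
  (forall g, G1 k g -> forall q, in_O phi k q -> in_O phi k (g q)) /\
  (~~ odd k -> forall g, G0 k g -> forall q, in_O phi k q -> in_O phi k (g q)).
Proof.
move=> k3 pr _.
have k0 : (0 < k)%N by lia.
have pk : phi ^+ k = 1 := prim_expr_order pr.
have D4 : forall g0, gens_D4 g0 -> forall q, in_O phi k q -> in_O phi k (g0 q).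
  move=> g0 [->|[->|->]] q Hq; [eapply g_it | eapply g_js | eapply g_ijst]; eassumption.
split.
  move=> g Hg; apply: (gen_pres (in_O phi k) (gens_G1 k) g _ Hg) => g0 [->|[->|[->|HD]]] q Hq;
    [eapply g14 | eapply g24 | eapply g34 | eapply D4]; eassumption.
move=> ev.
set h := k./2.
have hk : (k = h + h)%N.
  by rewrite /h; move: (odd_double_half k); rewrite (negbTE ev) add0n -addnn.
have hm1 : phi ^+ h = -1.
  have h2 : (phi ^+ h - 1) * (phi ^+ h + 1) = 0.
    have e : phi ^+ h * phi ^+ h = 1 by rewrite -exprD -hk.
    transitivity (phi ^+ h * phi ^+ h - 1); [ring | by rewrite e subrr].
  have hn1 : phi ^+ h != 1.
    by rewrite -(prim_order_dvd pr); apply/negP => /dvdn_leq; lia.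
  move/eqP: h2; rewrite mulf_eq0 subr_eq0 (negbTE hn1) /= addr_eq0 => /eqP //.
move=> g Hg; apply: (gen_pres (in_O phi k) (gens_G0 k) g _ Hg) => g0 [->|[->|[->|[->|HD]]]] q Hq;
  [eapply g1 | eapply g2 | eapply g3 | eapply g4 | eapply D4]; eassumption.
Qed.
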